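(* Let $n\ge2$ and let $a_1<a_2$ be positive integers. Let $\phi:\mathbb{R}^n_{\ge0}\to\mathbb{R}^2_{\ge0}$, $\phi(x)=(\sum_{i=1}^n x_i^{a_1},\sum_{i=1}^n x_i^{a_2})$. Then $$\mathrm{im}(\phi)=\bigl\{c\in\mathbb{R}^2_{\ge0}:\ c_2^{a_1}\le c_1^{a_2}\le n^{a_2-a_1}c_2^{a_1}\bigr\}.$$ *)

(* Defs.v *)
From mathcomp Require Import all_boot all_order all_algebra.
From mathcomp Require Import reals.
Set Implicit Arguments. Unset Strict Implicit. Unset Printing Implicit Defensive.
Import Order.TTheory GRing.Theory Num.Theory.
Local Open Scope ring_scope.

Definition phi (R : realType) (n a1 a2 : nat) (x : 'I_n -> R) : R * R :=
  (\sum_(i < n) x i ^+ a1, \sum_(i < n) x i ^+ a2).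
Arguments phi : clear implicits.

(* Main.v *)
Require Import Defs.
From mathcomp Require Import all_boot all_order all_algebra reals.
Import Order.TTheory GRing.Theory Num.Theory.
Local Open Scope ring_scope.
Lemma amgm2 (R : realFieldType) (p q : nat) (x t : R) : (p <= q)%N -> (0 < q)%N -> 0 <= x -> 0 <= t ->
  q%:R * (x ^+ p * t ^+ (q - p)) <= p%:R * x ^+ q + (q - p)%:R * t ^+ q.
Proof.
move=> hpq hq hx ht.
pose E := fun i : ('I_p + 'I_(q-p))%type => match i with inl _ => x ^+ q | inr _ => t ^+ q end.
have := @leif_AGM R _ predT E.
have hc : #|predT : {pred ('I_p + 'I_(q-p))%type}| = q.
  by rewrite cardT -cardE card_sum !card_ord subnKC.
rewrite /= hc.
move=> /(_ _) [].
  by case=> i _ /=; rewrite exprn_ge0.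
move=> H _; move: H.
rewrite (big_sumType _ predT) (big_sumType _ predT) /= !prodr_const !sumr_const !card_ord.
rewrite -!exprM [(q * p)%N]mulnC [(q * (q - p))%N]mulnC !exprM -exprMn.
have hq0 : (0 : R) < q%:R by rewrite ltr0n.
rewrite ler_pXn2r // ?nnegrE ?mulr_ge0 ?exprn_ge0 ?addr_ge0 ?divr_ge0 ?mulrn_wge0 ?ler0n //.
rewrite ler_pdivlMr // => H.
  by rewrite mulrC (le_trans H) // !mulr_natl.
all: by rewrite ?exprn_ge0 ?invr_ge0 ?ler0n.
Qed.
Lemma root_ex (R : rcfType) (k : nat) (a : R) : (0 < k)%N -> 0 <= a -> exists2 t, 0 <= t & t ^+ k = a.
Proof.
move=> hk ha.
have h1 : (0:R) <= 1 + a by rewrite addr_ge0.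
have h2 : ('X^k - a%:P).[0] <= 0 <= ('X^k - a%:P).[1 + a].
  rewrite !hornerE expr0n eqn0Ngt hk /= sub0r oppr_le0 ha /= subr_ge0.
  by rewrite (le_trans _ (ler_eXnr _ _)) // ?lerDr // lerDl.
have [t /andP[t0 _]] := @poly_ivt R ('X^k - a%:P) 0 (1 + a) h1 h2.
by rewrite /root !hornerE subr_eq0 => /eqP; exists t.
Qed.

Lemma max_ex (R : realDomainType) (n : nat) (x : 'I_n.+1 -> R) : exists i, forall j, x j <= x i.
Proof.
exists [arg max_(i > ord0) x i]%O.
by case: (@arg_maxP _ R _ ord0 predT x) => // i _ H j; apply: H.
Qed.
Lemma ineq1 (R : realDomainType) (n p q : nat) (x : 'I_n -> R) :
  (0 < p)%N -> (p <= q)%N -> (forall i, 0 <= x i) ->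
  (\sum_(i < n) x i ^+ q) ^+ p <= (\sum_(i < n) x i ^+ p) ^+ q.
Proof.
move=> hp hpq hx.
case: n x hx => [|n] x hx.
  by rewrite !big_ord0 !expr0n (negbTE (lt0n_neq0 hp)) (negbTE (lt0n_neq0 (leq_trans hp hpq))).
have [i0 hi0] := max_ex _ _ x.
set M := x i0.
have M0 : 0 <= M by apply: hx.
have Sp0 : 0 <= \sum_(i < n.+1) x i ^+ p by apply: sumr_ge0 => i _; rewrite exprn_ge0.
have h1 : \sum_(i < n.+1) x i ^+ q <= M ^+ (q - p) * \sum_(i < n.+1) x i ^+ p.
  rewrite mulr_sumr; apply: ler_sum => i _.
  rewrite -{1}(subnKC hpq) exprD mulrC ler_wpM2r ?exprn_ge0 //.
  by rewrite lerXn2r ?nnegrE.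
have h2 : M ^+ p <= \sum_(i < n.+1) x i ^+ p.
  rewrite (bigD1 i0) //= lerDl; apply: sumr_ge0 => i _; rewrite exprn_ge0 //.
apply: (le_trans (lerXn2r _ _ _ h1)); rewrite ?nnegrE ?sumr_ge0 ?mulr_ge0 ?exprn_ge0 //.
  by move=> i _; rewrite exprn_ge0.
rewrite exprMn -exprM [((q - p) * p)%N]mulnC exprM.
have -> : (\sum_(i < n.+1) x i ^+ p) ^+ q = (\sum_(i < n.+1) x i ^+ p) ^+ p * (\sum_(i < n.+1) x i ^+ p) ^+ (q - p).
  by rewrite -exprD subnKC.
rewrite mulrC ler_wpM2l ?exprn_ge0 //.
by rewrite lerXn2r ?nnegrE ?exprn_ge0.
Qed.
Lemma ineq2 (R : rcfType) (n p q : nat) (x : 'I_n -> R) :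
  (0 < p)%N -> (p < q)%N -> (forall i, 0 <= x i) ->
  (\sum_(i < n) x i ^+ p) ^+ q <= n%:R ^+ (q - p) * (\sum_(i < n) x i ^+ q) ^+ p.
Proof.
move=> hp hpq hx.
have hq : (0 < q)%N by apply: ltn_trans hpq.
have hpq' : (p <= q)%N by apply: ltnW.
set Sp := \sum_(i < n) x i ^+ p; set Sq := \sum_(i < n) x i ^+ q.
have Sq0 : 0 <= Sq by apply: sumr_ge0 => i _; rewrite exprn_ge0.
have Sp0 : 0 <= Sp by apply: sumr_ge0 => i _; rewrite exprn_ge0.
have [Sqe|Sqn] := eqVneq Sq 0.
  have xi0 : forall i, x i = 0.
    move=> i; have := @psumr_eq0P _ _ predT (fun i => x i ^+ q) (fun i _ => exprn_ge0 q (hx i)) Sqe i isT.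
    by move/eqP; rewrite expf_eq0 hq /= => /eqP.
  have -> : Sp = 0 by rewrite /Sp big1 // => i _; rewrite xi0 expr0n (negbTE (lt0n_neq0 hp)).
  by rewrite expr0n (negbTE (lt0n_neq0 hq)) mulr_ge0 ?exprn_ge0 ?ler0n.
have Sqp : 0 < Sq by rewrite lt_neqAle eq_sym Sqn.
have n0 : (0 < n)%N.
  rewrite lt0n; apply/negP => /eqP nz; move/eqP: Sqn; apply.
  by rewrite /Sq big1 // => i _; have := ltn_ord i; rewrite [X in (_ < X)%N]nz.
have N0 : (0 : R) < n%:R by rewrite ltr0n.
have [t t0 ht] := root_ex _ q (Sq / n%:R) hq (divr_ge0 Sq0 (ler0n _ _)).
have tp : 0 < t.
  rewrite lt_neqAle t0 andbT; apply/eqP => te; move: ht; rewrite -te expr0n (negbTE (lt0n_neq0 hq)).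
  move/esym/eqP; rewrite mulf_eq0 invr_eq0 (negbTE Sqn) pnatr_eq0 /= => /eqP nz; by move: n0; rewrite nz.
have key : q%:R * (t ^+ (q - p) * Sp) <= p%:R * Sq + (q - p)%:R * (n%:R * t ^+ q).
  have -> : n%:R * t ^+ q = \sum_(i < n) t ^+ q by rewrite sumr_const card_ord mulr_natl.
  rewrite /Sp /Sq !mulr_sumr -big_split /=.
  by apply: ler_sum => i _; rewrite [t ^+ _ * _]mulrC amgm2.
have nt : n%:R * t ^+ q = Sq by rewrite ht mulrC divfK // lt0r_neq0.
rewrite nt -mulrDl -natrD subnKC // ler_pM2l ?ltr0n // in key.
have tqp : 0 < t ^+ (q - p) by rewrite exprn_gt0.
have key2 : Sp <= n%:R * t ^+ p.
  rewrite -(ler_pM2l tqp) (le_trans key) // -nt -(subnKC hpq') exprD.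
  by rewrite addKn [X in _ <= X]mulrC mulrA.
apply: (le_trans (lerXn2r q _ _ key2)); rewrite ?nnegrE ?mulr_ge0 ?exprn_ge0 ?ler0n //.
rewrite exprMn -exprM mulnC exprM ht exprMn mulrA exprVn.
have -> : n%:R ^+ q = n%:R ^+ (q - p) * n%:R ^+ p :> R by rewrite -exprD subnK.
rewrite -!mulrA [Sq ^+ p * _]mulrC mulVKf //.
by rewrite expf_neq0 // lt0r_neq0.
Qed.
From mathcomp Require Import ring.
Lemma sum_y (R : comPzRingType) (n' m : nat) (k l : R) :
  \sum_(i < n'.+1) (k * (if i == ord0 then 1 else l)) ^+ m = k ^+ m * (1 + n'%:R * l ^+ m).
Proof.
rewrite big_ord_recl eqxx mulr1 (eq_bigr (fun _ => (k * l) ^+ m)).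
  by rewrite sumr_const card_ord exprMn mulrDr mulr1 mulr_natl mulrnAr.
by move=> i _; rewrite eq_sym (negbTE (neq_lift _ _)).
Qed.

Theorem proposition5p2 (R : realType) (n a1 a2 : nat)
  (hn : (2 <= n)%N) (ha1 : (0 < a1)%N) (ha12 : (a1 < a2)%N) (c : R * R) :
  (exists x : 'I_n -> R, (forall i, 0 <= x i) /\ phi R n a1 a2 x = c) <->
  [/\ 0 <= c.1, 0 <= c.2,
      c.2 ^+ a1 <= c.1 ^+ a2 &
      c.1 ^+ a2 <= (n%:R) ^+ (a2 - a1) * c.2 ^+ a1].
Proof.
split.
  case=> x [hx <-] /=; split.
  - by apply: sumr_ge0 => i _; rewrite exprn_ge0.
  - by apply: sumr_ge0 => i _; rewrite exprn_ge0.
  - by apply: ineq1 => //; apply: ltnW.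
  - exact: ineq2.
case: c => c1 c2 /= [c10 c20 h1 h2].
set p := a1 in ha1 ha12 h1 h2 *; set q := a2 in ha12 h1 h2 *.
have hq : (0 < q)%N by apply: ltn_trans ha12.
case: n hn h2 => [|n'] // hn h2.
have [c1e|c1n] := eqVneq c1 0.
  have c2e : c2 = 0.
    have : c2 ^+ p == 0.
      rewrite eq_le exprn_ge0 // andbT.
      by move: h1; rewrite c1e expr0n (negbTE (lt0n_neq0 hq)).
    by rewrite expf_eq0 ha1 => /eqP.
  exists (fun _ => 0); split => //.
  rewrite /phi c1e c2e; congr pair; rewrite big1 // => i _; rewrite expr0n.
    by rewrite (negbTE (lt0n_neq0 ha1)).
  by rewrite (negbTE (lt0n_neq0 hq)).
have c1p : 0 < c1 by rewrite lt_neqAle eq_sym c1n.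
have c2p : 0 < c2.
  rewrite lt_neqAle c20 andbT eq_sym; apply/eqP => c2e; move: h2.
  rewrite c2e expr0n (negbTE (lt0n_neq0 ha1)) mulr0 => h.
  by have := exprn_gt0 q c1p; rewrite ltNge h.
set N : R := n'.+1%:R.
have N0 : 0 < N by rewrite ltr0n.
have eN : N ^+ q = N ^+ p * N ^+ (q - p) by rewrite -exprD subnKC // ltnW.
pose r := c2 ^+ p / c1 ^+ q.
pose Q := r *: (1 + n'%:R *: 'X^p) ^+ q - (1 + n'%:R *: 'X^q) ^+ p : {poly R}.
have hQ : forall l, Q.[l] = r * (1 + n'%:R * l ^+ p) ^+ q - (1 + n'%:R * l ^+ q) ^+ p.
  by move=> l; rewrite /Q !hornerE.
have hQ01 : Q.[0] <= 0 <= Q.[1].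
  rewrite !hQ !expr0n (negbTE (lt0n_neq0 ha1)) (negbTE (lt0n_neq0 hq)) !mulr0 !addr0 !expr1n.
  rewrite !mulr1 subr_le0 subr_ge0 nat1r -/N /r ler_pdivrMr ?exprn_gt0 // mul1r h1 /=.
  rewrite mulrAC ler_pdivlMr ?exprn_gt0 //.
  apply: (le_trans (ler_wpM2l _ h2)); first by rewrite exprn_ge0 // ltW.
  rewrite eN le_eqVlt; apply/orP; left; apply/eqP.
  by rewrite -/N mulrA mulrC.
have [l /andP[l0 l1] hl] := poly_ivt ler01 hQ01.
move: hl; rewrite /root hQ subr_eq0 => /eqP hl.
set A := 1 + n'%:R * l ^+ p in hl.
set B := 1 + n'%:R * l ^+ q in hl.
have A0 : 0 < A by rewrite (lt_le_trans ltr01) // lerDl mulr_ge0 ?ler0n ?exprn_ge0.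
have B0 : 0 <= B by rewrite addr_ge0 ?mulr_ge0 ?ler0n ?exprn_ge0.
have [k k0 hk] := root_ex R p (c1 / A) ha1 (divr_ge0 (ltW c1p) (ltW A0)).
exists (fun i => k * (if i == ord0 then 1 else l)); split.
  by move=> i; case: ifP => _; rewrite mulr_ge0.
rewrite /phi !sum_y -/A -/B; congr pair.
  by rewrite hk divfK // lt0r_neq0.
apply: (pexpIrn ha1); rewrite ?nnegrE ?mulr_ge0 ?exprn_ge0 ?(ltW c2p) //.
rewrite exprMn -exprM mulnC exprM hk -hl /r exprMn exprVn.
have H1 : c1 ^+ q != 0 by rewrite expf_neq0 // lt0r_neq0.
have H2 : A ^+ q != 0 by rewrite expf_neq0 // lt0r_neq0.
move: (c1 ^+ q) (A ^+ q) (c2 ^+ p) H1 H2 => a b d ha hb.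
by rewrite [d / a * b]mulrC mulrA divfK // mulrC divfK.
Qed.
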